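(* For each $k\in\mathbb N$, the class $\mathcal P_k$ is inner-product compatible: for all $\boldsymbol R,\boldsymbol S\in\mathcal P_k$ there exists $\boldsymbol Q\in\mathcal P_k$ such that the graph $\mathrm{tr}(\boldsymbol R^*\cdot\boldsymbol S)$ equals the underlying unlabelled graph of $\boldsymbol Q$.
   Context: A $(k,k)$-bilabelled graph is $\boldsymbol F=(F,\boldsymbol u,\boldsymbol v)$ with $\boldsymbol u,\boldsymbol v\in V(F)^k$; $F$ is its underlying graph. $\boldsymbol F^*=(F,\boldsymbol v,\boldsymbol u)$. $\mathrm{tr}(\boldsymbol F)$ is the unlabelled graph obtained from $F$ by identifying $u_i$ with $v_i$ for all $i$. Series composition $\boldsymbol F\cdot\boldsymbol F'$: disjoint union with $v_i$ identified with $u'_i$, multiple edges removed, labels $(\boldsymbol u,\boldsymbol v')$. Parallel composition $\boldsymbol F\odot\boldsymbol F'$: identify $u_i$ with $u'_i$ and $v_i$ with $v'_i$, multiple edges removed. For $\sigma\in\mathfrak S_{2k}$, $\boldsymbol F^\sigma$ has in-labels $(w_{\sigma(1)},\dots,w_{\sigma(k)})$ and out-labels $(w_{\sigma(k+1)},\dots,w_{\sigma(2k)})$, $\boldsymbol w=(u_1,\dots,u_k,v_1,\dots,v_k)$. $\mathscr C_k$ = cyclic group of rotations of the cyclic sequence $(1,\dots,k,2k,\dots,k+1)$. Bilabelled minors: via edge contraction, edge deletion, deletion of unlabelled vertices. $\boldsymbol C_k$: vertices $[2k]$, in-labels $(1,\dots,k)$, out-labels $(k+1,\dots,2k)$, edges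 $\{i,i+1\}$ ($i\in[2k]\setminus\{k,2k\}$), $\{1,k+1\},\{k,2k\}$; $\boldsymbol M_k$: same vertices/labels, edges $\{i,i+k\}$. $\mathcal Q_k^P,\mathcal Q_k^S$ = bilabelled minors of $\boldsymbol C_k,\boldsymbol M_k$; $\mathcal Q_k$ their union. $\mathcal P_k$ = smallest class of $(k,k)$-bilabelled graphs containing $\mathcal Q_k$, closed under series composition, under $\boldsymbol F\mapsto\boldsymbol F\odot\boldsymbol Q$ ($\boldsymbol Q\in\mathcal Q_k^P$), and under $\boldsymbol F\mapsto\boldsymbol F^\sigma$ ($\sigma\in\mathscr C_k$). *)

(* Defs.v *)
From mathcomp Require Import all_boot perm.
Set Implicit Arguments. Unset Strict Implicit. Unset Printing Implicit Defensive.

(* A graph: a finite vertex type with a symmetric adjacency relation;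
   loops (gE x x) are allowed, multiple edges are not representable. *)
Record graph := Graph { gV : finType; gE : rel gV; gsym : symmetric gE }.

Definition giso (G H : graph) : Prop :=
  exists f : gV G -> gV H, bijective f /\ forall a b, gE (f a) (f b) = gE a b.

(* (k,k)-bilabelled graph: in-labels u = bin, out-labels v = bout *)
Record bgraph (k : nat) := BGraph
  { bG : graph; bin : 'I_k -> gV bG; bout : 'I_k -> gV bG }.

Definition biso k (F F' : bgraph k) : Prop :=
  exists f : gV (bG F) -> gV (bG F'), [/\ bijective f,
    forall a b, gE (f a) (f b) = gE a b,
    forall i, f (bin F i) = bin F' i & forall i, f (bout F i) = bout F' i].

Lemma symclos_sym (V : finType) (e : rel V) :
  symmetric (fun a b => e a b || e b a).
Proof. by move=> a b; rewrite orbC. Qed.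
Definition mkgraph (V : finType) (e : rel V) : graph :=
  Graph (symclos_sym e).

Section Quot.
Variables (G : graph) (r : rel (gV G)).
Definition qrel := connect (fun x y => r x y || r y x).
Definition qclass (x : gV G) : {set gV G} := [set y | qrel x y].
Definition qtype := {A : {set gV G} | [exists x, A == qclass x]}.
Definition qproj (x : gV G) : qtype :=
  exist _ (qclass x)
    (introT existsP (ex_intro (fun z => qclass x == qclass z) x (eqxx _))).
(* two classes are adjacent iff some members are adjacent;
   multiple edges are thereby removed *)
Definition qE (A B : qtype) : bool :=
  [exists x, exists y, [&& x \in val A, y \in val B & gE x y]].
Lemma qE_sym : symmetric qE.
Proof.
move=> A B; apply/existsP/existsP=> -[x /existsP[y /and3P[hx hy he]]];
  exists y; apply/existsP; exists x; by rewrite hx hy gsym he.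
Qed.
Definition gquot : graph := Graph qE_sym.
End Quot.

Definition uE (G H : graph) (a b : (gV G + gV H)%type) : bool :=
  match a, b with
  | inl x, inl y => gE x y
  | inr x, inr y => gE x y
  | _, _ => false
  end.
Lemma uE_sym G H : symmetric (@uE G H).
Proof. by move=> [x|x] [y|y] //=; rewrite gsym. Qed.
Definition gunion (G H : graph) : graph := Graph (@uE_sym G H).

Section Ops.
Variable k : nat.

Definition bstar (F : bgraph k) : bgraph k := BGraph (bout F) (bin F).

Definition ser_rel (F F' : bgraph k) : rel (gV (gunion (bG F) (bG F'))) :=
  fun a b => [exists i, (a == inl (bout F i)) && (b == inr (bin F' i))].
Definition bser (F F' : bgraph k) : bgraph k :=
  @BGraph k (gquot (@ser_rel F F'))
    (fun i => qproj (@ser_rel F F') (inl (bin F i)))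
    (fun i => qproj (@ser_rel F F') (inr (bout F' i))).

Definition par_rel (F F' : bgraph k) : rel (gV (gunion (bG F) (bG F'))) :=
  fun a b => [exists i, ((a == inl (bin F i)) && (b == inr (bin F' i)))
                     || ((a == inl (bout F i)) && (b == inr (bout F' i)))].
Definition bpar (F F' : bgraph k) : bgraph k :=
  @BGraph k (gquot (@par_rel F F'))
    (fun i => qproj (@par_rel F F') (inl (bin F i)))
    (fun i => qproj (@par_rel F F') (inl (bout F i))).

Definition btr (F : bgraph k) : graph :=
  gquot (fun a b => [exists i, (a == bin F i) && (b == bout F i)]).

(* w = (u_1..u_k, v_1..v_k), indexed by 'I_(k+k) (0-based) *)
Definition wlab (F : bgraph k) (j : 'I_(k + k)) : gV (bG F) :=
  match split j with inl i => bin F i | inr i => bout F i end.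
Definition bperm (F : bgraph k) (s : {perm 'I_(k + k)}) : bgraph k :=
  BGraph (fun i => wlab F (s (lshift k i))) (fun i => wlab F (s (rshift k i))).

(* the cyclic sequence (1..k,2k,..,k+1), 0-based: position p |-> cyc p *)
Definition cyc (p : nat) : nat := if p < k then p else (k + k + k).-1 - p.
(* sigma in C_k : sigma is a rotation of that cyclic sequence *)
Definition inCk (s : {perm 'I_(k + k)}) : Prop :=
  exists r : nat, forall j : 'I_(k + k),
    val (s j) = cyc ((cyc j + r) %% (k + k)).

(* C_k and M_k, vertices 'I_(k+k) (0-based), in-labels 0..k-1,
   out-labels k..2k-1 *)
Definition Cedge (a b : 'I_(k + k)) : bool :=
  [|| (val b == (val a).+1) && ((val b < k) || (k <= val a)),
      (val a == 0) && (val b == k)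
    | ((val a).+1 == k) && ((val b).+1 == k + k)].
Definition Medge (a b : 'I_(k + k)) : bool := val b == val a + k.
Definition bC : bgraph k :=
  @BGraph k (mkgraph Cedge) (fun i => lshift k i) (fun i => rshift k i).
Definition bM : bgraph k :=
  @BGraph k (mkgraph Medge) (fun i => lshift k i) (fun i => rshift k i).

(* F' arises from F by deleting edges and unlabelled vertices (up to iso) *)
Definition sub_step (F F' : bgraph k) : Prop :=
  exists f : gV (bG F') -> gV (bG F), [/\ injective f,
    forall a b, gE a b -> gE (f a) (f b),
    forall i, f (bin F' i) = bin F i & forall i, f (bout F' i) = bout F i].

(* F' arises from F by contracting the edge {x,y}, x <> y (up to iso) *)
Definition contr_step (F F' : bgraph k) : Prop :=
  exists (x y : gV (bG F)) (f : gV (bG F) -> gV (bG F')),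
    [/\ x != y, gE x y, forall b, exists a, f a = b,
        forall a b, f a = f b <-> [\/ a = b, (a = x /\ b = y) | (a = y /\ b = x)]
      & forall a' b', gE a' b' <-> exists a b,
           [/\ f a = a', f b = b', gE a b &
               ~ ((a = x /\ b = y) \/ (a = y /\ b = x))]] /\
    (forall i, f (bin F i) = bin F' i) /\
    (forall i, f (bout F i) = bout F' i).

Inductive bminor (F : bgraph k) : bgraph k -> Prop :=
| bminor_refl : bminor F F
| bminor_step G H : bminor F G -> sub_step G H \/ contr_step G H -> bminor F H.

Definition QP (F : bgraph k) : Prop := bminor bC F.
Definition QS (F : bgraph k) : Prop := bminor bM F.
Definition Q (F : bgraph k) : Prop := QP F \/ QS F.

(* the class P_k (closed under bilabelled isomorphism, as classes of
   bilabelled graphs are considered up to isomorphism in the paper) *)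
Inductive P : bgraph k -> Prop :=
| P_Q F : Q F -> P F
| P_ser F F' : P F -> P F' -> P (bser F F')
| P_par F Q' : P F -> QP Q' -> P (bpar F Q')
| P_perm F s : P F -> inCk s -> P (bperm F s)
| P_iso F F' : P F -> biso F F' -> P F'.
End Ops.

(* Main.v *)
Require Import Defs.
From mathcomp Require Import all_boot perm zify.
Set Implicit Arguments. Unset Strict Implicit. Unset Printing Implicit Defensive.

Ltac ifs := repeat match goal with
  | |- context [if ?b then _ else _] =>
      lazymatch b with context [if _ then _ else _] => fail | true => fail | false => fail | _ =>
        let h := fresh "hif" in case: (boolP b) => h; cbv iota end
  end.

Section Gen.

Lemma connect_map (T U : finType) (e : rel T) (e' : rel U) (f : T -> U) :
  (forall x y, e x y -> connect e' (f x) (f y)) ->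
  forall x y, connect e x y -> connect e' (f x) (f y).
Proof.
move=> H x _ /connectP[p ep ->]; elim: p x ep => [|z p IH] x /=.
  by rewrite connect0.
by case/andP=> exz /IH; apply: connect_trans; apply: H.
Qed.

Lemma connect_inv (T : finType) (U : Type) (e : rel T) (f : T -> U) :
  (forall x y, e x y -> f x = f y) ->
  forall x y, connect e x y -> f x = f y.
Proof.
move=> H x _ /connectP[p ep ->]; elim: p x ep => [|z p IH] x //=.
by case/andP=> exz /IH <-; apply: H.
Qed.

Variables (G : graph) (r : rel (gV G)).

Lemma qrel_sym x y : qrel r x y = qrel r y x.
Proof. by apply: sym_connect_sym => a b; rewrite orbC. Qed.

Lemma qrel_trans x y z : qrel r x y -> qrel r y z -> qrel r x z.
Proof. exact: connect_trans. Qed.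

Lemma qrel_refl x : qrel r x x.
Proof. exact: connect0. Qed.

Lemma qrel1 x y : r x y -> qrel r x y.
Proof. by move=> h; apply: connect1; rewrite h. Qed.

Lemma qclassE x y : (y \in qclass r x) = qrel r x y.
Proof. by rewrite inE. Qed.

Lemma qclass_eq x y : qclass r x = qclass r y <-> qrel r x y.
Proof.
split=> [e|h].
  by rewrite -qclassE e qclassE qrel_refl.
apply/setP=> z; rewrite !qclassE; apply/idP/idP=> h2.
  by apply: qrel_trans h2; rewrite qrel_sym.
exact: qrel_trans h h2.
Qed.

Lemma qprojE x y : qproj r x = qproj r y <-> qrel r x y.
Proof.
split=> [e|/qclass_eq e]; last by apply: val_inj.
by apply/qclass_eq; rewrite -[qclass r x]/(val (qproj r x)) e.
Qed.

Lemma qproj_surj (A : qtype r) : exists a, qproj r a = A.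
Proof.
case: A => A /= h; have /existsP[x /eqP e] := h.
by exists x; apply: val_inj => /=; rewrite e.
Qed.

Lemma mem_qproj x (A : qtype r) : x \in val A -> qproj r x = A.
Proof.
have [a <-] := qproj_surj A => /=; rewrite qclassE => h.
by apply/qprojE; rewrite qrel_sym.
Qed.

End Gen.

Definition pres (G W : graph) (p : gV G -> gV W) :=
  (forall w, exists a, p a = w) /\
  (forall x y, gE x y <-> exists a b, [/\ p a = x, p b = y & gE a b]).

Lemma pres_quot G (r : rel (gV G)) : @pres G (gquot r) (qproj r).
Proof.
split; first exact: qproj_surj.
move=> X Y /=; split.
  case/existsP=> x /existsP[y /and3P[hx hy he]].
  by exists x, y; split=> //; apply: mem_qproj.
case=> a [b [<- <- he]]; apply/existsP; exists a; apply/existsP; exists b.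
by rewrite /= !qclassE !qrel_refl he.
Qed.

Lemma pres_comp G W W' (p : gV G -> gV W) (q : gV W -> gV W') :
  pres p -> pres q -> pres (fun a => q (p a)).
Proof.
case=> ps pe [qs qe]; split.
  by move=> w; have [x <-] := qs w; have [a <-] := ps x; exists a.
move=> x y; split.
  case/qe=> a [b [<- <- /pe [a' [b' [<- <- h]]]]].
  by exists a', b'.
case=> a [b [<- <- h]]; apply/qe; exists (p a), (p b); split=> //.
by apply/pe; exists a, b.
Qed.

Lemma pres_id G : @pres G G id.
Proof.
split; first by move=> w; exists w.
by move=> x y; split=> [h|[a [b [-> -> h]]]] //; exists x, y.
Qed.

Lemma pres_isoE G W W' (p : gV G -> gV W) (p' : gV G -> gV W') :
  pres p -> pres p' -> (forall a b, p a = p b <-> p' a = p' b) ->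
  exists f : gV W -> gV W', [/\ bijective f, forall a b, gE (f a) (f b) = gE a b
     & forall a, f (p a) = p' a].
Proof.
case=> ps pe [ps' pe'] ker.
have ps1 : forall w, exists a, p a == w.
  by move=> w; have [a e] := ps w; exists a; apply/eqP.
have ps1' : forall w, exists a, p' a == w.
  by move=> w; have [a e] := ps' w; exists a; apply/eqP.
pose f w := p' (xchoose (ps1 w)).
pose g w := p (xchoose (ps1' w)).
have fp : forall a, f (p a) = p' a.
  by move=> a; apply/ker; exact: (eqP (xchooseP (ps1 (p a)))).
have gp : forall a, g (p' a) = p a.
  by move=> a; apply/ker; exact: (eqP (xchooseP (ps1' (p' a)))).
exists f; split=> //.
  exists g.
    by move=> w; have [a <-] := ps w; rewrite fp gp.
  by move=> w; have [a <-] := ps' w; rewrite gp fp.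
move=> x y; have [a <-] := ps x; have [b <-] := ps y; rewrite !fp.
apply/idP/idP.
  case/pe'=> a' [b' [e1 e2 h]]; apply/pe; exists a', b'; split=> //.
    by apply/ker.
  by apply/ker.
case/pe=> a' [b' [e1 e2 h]]; apply/pe'; exists a', b'; split=> //.
  by apply/ker.
by apply/ker.
Qed.

Lemma pres_iso G W W' (p : gV G -> gV W) (p' : gV G -> gV W') :
  pres p -> pres p' -> (forall a b, p a = p b <-> p' a = p' b) -> giso W W'.
Proof. by move=> h1 h2 h3; have [f [? ? _]] := pres_isoE h1 h2 h3; exists f. Qed.

Lemma pres_bij G W (f : gV G -> gV W) :
  bijective f -> (forall a b, gE (f a) (f b) = gE a b) -> pres f.
Proof.
case=> g fg gf fe; split; first by move=> w; exists (g w).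
move=> x y; split=> [h|[a [b [<- <- h]]]]; last by rewrite fe.
by exists (g x), (g y); rewrite !gf -fe !gf.
Qed.

Section Star.
Variable k : nat.
Implicit Types F G H : bgraph k.

Lemma pres_biso (B : graph) F F' (p : gV B -> gV (bG F)) (p' : gV B -> gV (bG F')) :
  pres p -> pres p' -> (forall a b, p a = p b <-> p' a = p' b) ->
  (forall i, exists a, bin F i = p a /\ bin F' i = p' a) ->
  (forall i, exists a, bout F i = p a /\ bout F' i = p' a) -> biso F F'.
Proof.
move=> h1 h2 h3 hi ho; have [f [fb fe fp]] := pres_isoE h1 h2 h3.
exists f; split=> // i.
  by have [a [-> ->]] := hi i.
by have [a [-> ->]] := ho i.
Qed.

Lemma biso_refl F : biso F F.
Proof. by exists id; split=> //; exists id. Qed.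

Lemma biso_sym F G : biso F G -> biso G F.
Proof.
case=> f [[g fg gf] fe fi fo]; exists g; split.
- by exists f.
- by move=> a b; rewrite -fe !gf.
- by move=> i; rewrite -fi fg.
- by move=> i; rewrite -fo fg.
Qed.

Lemma biso_trans F G H : biso F G -> biso G H -> biso F H.
Proof.
case=> f [[f' ff' f'f] fe fi fo]; case=> g [[g' gg' g'g] ge gi go].
exists (fun x => g (f x)); split.
- by exists (fun x => f' (g' x)) => x; rewrite ?gg' ?ff' ?g'g ?f'f.
- by move=> a b; rewrite ge fe.
- by move=> i; rewrite fi gi.
- by move=> i; rewrite fo go.
Qed.

Lemma P_biso F G : P F -> biso F G -> P G.
Proof. exact: P_iso. Qed.

Lemma bminor_trans F G H : bminor F G -> bminor G H -> bminor F H.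
Proof.
move=> h1 h2; elim: h2 => [|X Y _ IH st] //; exact: bminor_step IH st.
Qed.

Lemma sub_of_biso F G : biso G F -> sub_step F G.
Proof.
case=> f [fb fe fi fo]; exists f; split=> //.
  exact: bij_inj.
by move=> a b; rewrite fe.
Qed.

Lemma step_star F G : sub_step F G \/ contr_step F G ->
  sub_step (bstar F) (bstar G) \/ contr_step (bstar F) (bstar G).
Proof.
case=> [[f [fi fe hi ho]]|[x [y [f [h [hi ho]]]]]].
  by left; exists f; split.
by right; exists x, y, f; split.
Qed.

Lemma bminor_star F G : bminor F G -> bminor (bstar F) (bstar G).
Proof.
elim=> [|X Y _ IH st]; first exact: bminor_refl.
exact: bminor_step IH (step_star st).
Qed.

Lemma split_l (i : 'I_k) : split (lshift k i) = inl i.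
Proof. exact: (unsplitK (inl i)). Qed.
Lemma split_r (i : 'I_k) : split (rshift k i) = inr i.
Proof. exact: (unsplitK (inr i)). Qed.

Definition sw (j : 'I_(k + k)) : 'I_(k + k) :=
  match split j with inl i => rshift k i | inr i => lshift k i end.



Lemma sw_l i : sw (lshift k i) = rshift k i.
Proof. by rewrite /sw split_l. Qed.
Lemma sw_r i : sw (rshift k i) = lshift k i.
Proof. by rewrite /sw split_r. Qed.

Lemma val_sw j : val (sw j) = if j < k then j + k else j - k.
Proof.
case: (split_ordP j) => i ->; rewrite ?sw_l ?sw_r /=; have := ltn_ord i => h.
all: try case: ifP => h2; lia.
Qed.

Lemma swK : involutive sw.
Proof. by move=> j; case: (split_ordP j) => i ->; [rewrite sw_l sw_r | rewrite sw_r sw_l]. Qed.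

Lemma wlab_star F j : wlab (bstar F) (sw j) = wlab F j.
Proof.
by case: (split_ordP j) => i ->; rewrite ?sw_l ?sw_r /wlab /= ?split_l ?split_r.
Qed.

Lemma wlab_l F i : wlab F (lshift k i) = bin F i.
Proof. by rewrite /wlab split_l. Qed.
Lemma wlab_r F i : wlab F (rshift k i) = bout F i.
Proof. by rewrite /wlab split_r. Qed.

Lemma Cedge_sw a b : Cedge a b -> Cedge (sw a) (sw b) || Cedge (sw b) (sw a).
Proof.
rewrite /Cedge !val_sw /=; have := ltn_ord a; have := ltn_ord b.
by move=> h1 h2; case: ifP => h3; case: ifP => h4; lia.
Qed.

Lemma Medge_sw a b : Medge a b -> Medge (sw a) (sw b) || Medge (sw b) (sw a).
Proof.
rewrite /Medge !val_sw /=; have := ltn_ord a; have := ltn_ord b.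
by move=> h1 h2; case: ifP => h3; case: ifP => h4; lia.
Qed.

Lemma bminor_bC_star : bminor (bC k) (bstar (bC k)).
Proof.
apply: bminor_step (bminor_refl _) _; left.
exists sw; split.
- exact: can_inj swK.
- by move=> a b /= /orP[] /Cedge_sw //; rewrite orbC.
- by move=> i; rewrite /= sw_r.
- by move=> i; rewrite /= sw_l.
Qed.

Lemma bminor_bM_star : bminor (bM k) (bstar (bM k)).
Proof.
apply: bminor_step (bminor_refl _) _; left.
exists sw; split.
- exact: can_inj swK.
- by move=> a b /= /orP[] /Medge_sw //; rewrite orbC.
- by move=> i; rewrite /= sw_r.
- by move=> i; rewrite /= sw_l.
Qed.

Lemma QP_star F : QP F -> QP (bstar F).
Proof. by move=> h; apply: bminor_trans bminor_bC_star (bminor_star h). Qed.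
Lemma QS_star F : QS F -> QS (bstar F).
Proof. by move=> h; apply: bminor_trans bminor_bM_star (bminor_star h). Qed.


Lemma qker (G : graph) (r r' : rel (gV G)) :
  (forall a b, r a b -> qrel r' a b) -> (forall a b, r' a b -> qrel r a b) ->
  forall a b, qproj r a = qproj r b <-> qproj r' a = qproj r' b.
Proof.
move=> h1 h2 a b; rewrite !qprojE.
have sub : forall (s s' : rel (gV G)), (forall a b, s a b -> qrel s' a b) ->
   forall a b, qrel s a b -> qrel s' a b.
  move=> s s' h x y; apply: connect_sub => {}x {}y /orP[] /h //.
  by rewrite qrel_sym.
by split; apply: sub.
Qed.

Lemma star_par F Q : biso (bstar (bpar F Q)) (bpar (bstar F) (bstar Q)).
Proof.
apply: (@pres_biso (gunion (bG F) (bG Q)) (bstar (bpar F Q)) (bpar (bstar F) (bstar Q))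
  (qproj (@par_rel _ F Q)) (qproj (@par_rel _ (bstar F) (bstar Q)))).
- exact: pres_quot.
- exact: pres_quot.
- apply: qker => a b h; apply: qrel1; move: h => /existsP[i h];
    by apply/existsP; exists i; rewrite orbC.
- by move=> i; exists (inl (bout F i)).
- by move=> i; exists (inl (bin F i)).
Qed.

Definition swU (A B : Type) (x : A + B) : B + A :=
  match x with inl a => inr a | inr b => inl b end.

Lemma swUK A B (x : A + B) : swU (swU x) = x.
Proof. by case: x. Qed.

Lemma star_ser F F' : biso (bstar (bser F F')) (bser (bstar F') (bstar F)).
Proof.
pose r := @ser_rel _ F F'; pose r' := @ser_rel _ (bstar F') (bstar F).
have hr : forall a b, r a b -> r' (swU b) (swU a).
  move=> a b /existsP[i /andP[/eqP -> /eqP ->]].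
  by apply/existsP; exists i; rewrite /= !eqxx.
have hr' : forall a b, r' a b -> r (swU b) (swU a).
  move=> a b /existsP[i /andP[/eqP -> /eqP ->]].
  by apply/existsP; exists i; rewrite /= !eqxx.
apply: (@pres_biso (gunion (bG F) (bG F')) (bstar (bser F F')) (bser (bstar F') (bstar F))
  (qproj r) (fun a => qproj r' (swU a))).
- exact: pres_quot.
- apply: (@pres_comp _ (gunion (bG F') (bG F))).
    apply: pres_bij; first by exists (@swU _ _) => x; rewrite swUK.
    by case=> a [] b.
  exact: pres_quot.
- move=> a b; rewrite !qprojE; split.
    apply: connect_map => x y /orP[] /hr h; apply: connect1;
    first [by apply/orP; left | by apply/orP; right].
  move=> h; rewrite -(swUK a) -(swUK b); move: h; apply: connect_map.
  move=> x y /orP[] /hr' h; apply: connect1;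
  first [by apply/orP; left | by apply/orP; right].
- by move=> i; exists (inr (bout F' i)).
- by move=> i; exists (inl (bin F i)).
Qed.

Definition swp : {perm 'I_(k + k)} := perm (can_inj swK).

Lemma swpE j : swp j = sw j.
Proof. by rewrite permE. Qed.

Lemma star_perm F (s : {perm 'I_(k + k)}) :
  biso (bstar (bperm F s)) (bperm (bstar F) (swp * s * swp)%g).
Proof.
exists id; split => //; first by exists id.
- move=> i /=; rewrite !permM !swpE sw_l wlab_star //.
- move=> i /=; rewrite !permM !swpE sw_r wlab_star //.
Qed.

Lemma modK (x K : nat) : x < K + K -> x %% K = if x < K then x else x - K.
Proof.
case: ifP => h1 h2; first by rewrite modn_small.
have -> : x = (x - K) + K by lia.
by rewrite modnDr modn_small; lia.
Qed.

Lemma cyc_lt p : p < k + k -> cyc k p < k + k.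
Proof. by rewrite /cyc; ifs; lia. Qed.

Lemma sw_cyc p : p < k + k ->
  (if cyc k p < k then cyc k p + k else cyc k p - k) = cyc k ((k + k).-1 - p).
Proof. by rewrite /cyc; ifs; lia. Qed.

Lemma cyc_sw j : cyc k (val (sw j)) = (k + k).-1 - cyc k j.
Proof. by rewrite val_sw /cyc; have := ltn_ord j; ifs; lia. Qed.

Lemma inCk_star (s : {perm 'I_(k + k)}) : inCk s -> inCk (swp * s * swp)%g.
Proof.
case=> r hs; exists (k + k - r %% (k + k)) => j.
have hj := ltn_ord j.
have K0 : 0 < k + k by lia.
have r0 := ltn_pmod r K0.
rewrite !permM !swpE val_sw hs sw_cyc; last exact: ltn_pmod.
rewrite cyc_sw -modnDmr; congr (cyc k _).
have cl : cyc k j < k + k by apply: cyc_lt.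
move: r0; set t := r %% (k + k) => r0.
rewrite !modK; try lia.
by ifs; lia.
Qed.

Lemma Q_star F : Q F -> Q (bstar F).
Proof. by case=> h; [left; apply: QP_star | right; apply: QS_star]. Qed.

Lemma P_star F : P F -> P (bstar F).
Proof.
elim=> {F} [F hQ|F F' _ h1 _ h2|F Q' _ h hq|F s _ h hs|F F' _ h hi].
- by apply: P_Q; apply: Q_star.
- by apply: P_biso (biso_sym (star_ser F F')); apply: P_ser.
- by apply: P_biso (biso_sym (star_par F Q')); apply: P_par => //; apply: QP_star.
- by apply: P_biso (biso_sym (star_perm F s)); apply: P_perm => //; apply: inCk_star.
- apply: P_biso h _; case: hi => f [fb fe fi fo]; exists f; split => //.
Qed.

End Star.

Lemma qrel_inv (G : graph) (r : rel (gV G)) (U : Type) (f : gV G -> U) :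
  (forall x y, r x y -> f x = f y) -> forall x y, qrel r x y -> f x = f y.
Proof.
move=> h; apply: connect_inv => x y /orP[/h //|/h e]; by rewrite e.
Qed.

Lemma qrel_sub (G : graph) (r r' : rel (gV G)) :
  (forall x y, r x y -> qrel r' x y) -> forall x y, qrel r x y -> qrel r' x y.
Proof.
move=> h; apply: connect_sub => x y /orP[/h //|/h e].
by change (qrel r' x y); rewrite qrel_sym.
Qed.

Lemma pres_inl (Y H : graph) (r : rel (gV (gunion Y H))) :
  (forall x y : gV H, ~~ gE x y) -> (forall q, exists y, qrel r (inr q) (inl y)) ->
  @pres Y (gquot r) (fun y => qproj r (inl y)).
Proof.
move=> hH hq; have [qs qe] := pres_quot r; split.
  move=> A; have [z <-] := qs A; case: z => [y|q]; first by exists y.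
  by have [y h] := hq q; exists y; apply/qprojE; rewrite qrel_sym.
move=> A B; split.
  move/qe => [x [y [<- <- h]]]; case: x y h => [a|a] [b|b] //= h.
    by exists a, b.
  by have := hH a b; rewrite h.
by case=> a [b [<- <- h]]; apply/qe; exists (inl a), (inl b).
Qed.

Section Zip.
Variable k : nat.

Definition LGspec (T : eqType) (Q : bgraph k) (c : 'I_(k + k) -> T) :=
  [/\ forall x y : gV (bG Q), ~~ gE x y,
      forall q, exists al, wlab Q al = q &
      forall al be, wlab Q al = wlab Q be <-> c al = c be].

Definition presK (G0 : graph) (Y : bgraph k) (p : gV G0 -> gV (bG Y))
   (s : rel (gV G0)) (lin lout : 'I_k -> gV G0) :=
  [/\ pres p, forall a b, p a = p b <-> qrel s a b,
      forall i, bin Y i = p (lin i) & forall i, bout Y i = p (lout i)].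
Arguments presK : clear implicits.

Definition wl (V : Type) (lin lout : 'I_k -> V) (al : 'I_(k + k)) : V :=
  match split al with inl i => lin i | inr i => lout i end.

Lemma wl_l V (lin lout : 'I_k -> V) i : wl lin lout (lshift k i) = lin i.
Proof. by rewrite /wl split_l. Qed.
Lemma wl_r V (lin lout : 'I_k -> V) i : wl lin lout (rshift k i) = lout i.
Proof. by rewrite /wl split_r. Qed.

Definition mrel (V : eqType) (T : eqType) (c : 'I_(k + k) -> T) (lin lout : 'I_k -> V) : rel V :=
  fun a b => [exists al, exists be,
        [&& c al == c be, a == wl lin lout al & b == wl lin lout be]].

Lemma par_rel_w (Y Q : bgraph k) al :
  @par_rel _ Y Q (inl (wlab Y al)) (inr (wlab Q al)).
Proof.
case: (split_ordP al) => i ->; apply/existsP; exists i;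
  by rewrite ?wlab_l ?wlab_r !eqxx ?orbT.
Qed.

Lemma par_rel_inv (Y Q : bgraph k) x y : @par_rel _ Y Q x y ->
  exists al, x = inl (wlab Y al) /\ y = inr (wlab Q al).
Proof.
case/existsP=> i /orP[] /andP[/eqP -> /eqP ->].
  by exists (lshift k i); rewrite !wlab_l.
by exists (rshift k i); rewrite !wlab_r.
Qed.

Lemma presK_par G0 (Y : bgraph k) p s lin lout (T : eqType) (Q : bgraph k)
   (c : 'I_(k + k) -> T) :
  presK G0 Y p s lin lout -> LGspec Q c ->
  presK G0 (bpar Y Q) (fun a => qproj (@par_rel _ Y Q) (inl (p a)))
    (relU s (mrel c lin lout)) lin lout.
Proof.
case=> ps pk pin pout [qe qs qk].
set m := mrel c lin lout; set r := @par_rel _ Y Q.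
have wY : forall al, wlab Y al = p (wl lin lout al).
  by move=> al; case: (split_ordP al) => i ->; rewrite ?wlab_l ?wlab_r ?wl_l ?wl_r.
have sub : forall x y, qrel s x y -> qrel (relU s m) x y.
  by apply: qrel_sub => x y h; apply: qrel1; rewrite /= h.
split.
- apply: (@pres_comp G0 (bG Y) (bG (bpar Y Q)) p (fun y => qproj r (inl y)) ps).
  apply: pres_inl => //.
  move=> q; have [al <-] := qs q; exists (wlab Y al); rewrite qrel_sym.
  exact: qrel1 (par_rel_w Y Q al).
- move=> a b; split; last first.
    apply: (qrel_inv (f := fun z => qproj r (inl (p z)))) => x y /orP[/qrel1 /pk -> //|].
    case/existsP=> al /existsP[be /and3P[/eqP hc /eqP -> /eqP ->]].
    rewrite -!wY; apply/qprojE.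
    apply: qrel_trans (qrel1 (par_rel_w Y Q al)) _.
    rewrite (proj2 (qk al be) hc) qrel_sym; exact: qrel1 (par_rel_w Y Q be).
  have ps1 : forall y, exists a, p a == y.
    by move=> y; have [a1 e] := (proj1 ps) y; exists a1; apply/eqP.
  have qs1 : forall q, exists al, wlab Q al == q.
    by move=> q; have [al e] := qs q; exists al; apply/eqP.
  pose phi (z : gV (gunion (bG Y) (bG Q))) : qtype (relU s m) :=
    match z with
    | inl y => qproj _ (xchoose (ps1 y))
    | inr q => qproj _ (wl lin lout (xchoose (qs1 q)))
    end.
  have phiY : forall a, phi (inl (p a)) = qproj (relU s m) a.
    move=> a0; apply/qprojE/sub/pk; exact: (eqP (xchooseP (ps1 (p a0)))).
  move/qprojE/(qrel_inv (f := phi)) => h.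
  apply/qprojE; rewrite -!phiY; apply: h => x y /par_rel_inv [al [-> ->]].
  rewrite wY phiY /=; apply/qprojE; rewrite qrel_sym; apply: qrel1; apply/orP; right.
  apply/existsP; exists (xchoose (qs1 (wlab Q al))); apply/existsP; exists al.
  rewrite !eqxx; apply/andP; split => //; apply/eqP; apply: (proj1 (qk _ _)).
  exact: (eqP (xchooseP (qs1 (wlab Q al)))).
- by move=> i; rewrite /= pin.
- by move=> i; rewrite /= pout.
Qed.


Lemma presK_ser G0 (Y : bgraph k) p s lin lout (G : bgraph k) (t : 'I_k -> 'I_k) :
  presK G0 Y p s lin lout ->
  (forall x y : gV (bG G), ~~ gE x y) -> (forall g, exists i, bin G i = g) ->
  (forall i i', bin G i = bin G i' -> p (lout i) = p (lout i')) ->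
  (forall i, bout G i = bin G (t i)) ->
  presK G0 (bser Y G) (fun a => qproj (@ser_rel _ Y G) (inl (p a)))
    s lin (fun i => lout (t i)).
Proof.
case=> ps pk pin pout ge gs gk gt.
set r := @ser_rel _ Y G.
have hr : forall i, r (inl (bout Y i)) (inr (bin G i)).
  by move=> i; apply/existsP; exists i; rewrite !eqxx.
split.
- apply: (@pres_comp G0 (bG Y) (bG (bser Y G)) p (fun y => qproj r (inl y)) ps).
  apply: pres_inl => // g; have [i <-] := gs g; exists (bout Y i).
  by rewrite qrel_sym; apply: qrel1.
- move=> a b; split; last first.
    by move/pk => ->.
  have gs1 : forall g, exists i, bin G i == g.
    by move=> g; have [i e] := gs g; exists i; apply/eqP.
  pose phi (z : gV (gunion (bG Y) (bG G))) : gV (bG Y) :=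
    match z with inl y => y | inr g => bout Y (xchoose (gs1 g)) end.
  move/qprojE/(qrel_inv (f := phi)) => h; apply/pk; apply: h.
  move=> x y /existsP[i /andP[/eqP -> /eqP ->]] /=.
  by rewrite !pout; apply: gk; exact: (esym (eqP (xchooseP (gs1 (bin G i))))).
- by move=> i; rewrite /= pin.
- move=> i; rewrite /= gt -pout. apply/(@qprojE _ r); rewrite qrel_sym; exact: qrel1.
Qed.

Lemma presK_star G0 (Y : bgraph k) p s lin lout :
  presK G0 Y p s lin lout -> presK G0 (bstar Y) p s lout lin.
Proof. by case=> *; split. Qed.

Lemma presK_ext G0 (Y : bgraph k) p s lin lout s' lin' lout' :
  presK G0 Y p s lin lout ->
  (forall a b, qrel s a b <-> qrel s' a b) ->
  (forall i, p (lin i) = p (lin' i)) -> (forall i, p (lout i) = p (lout' i)) ->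
  presK G0 Y p s' lin' lout'.
Proof.
case=> ps pk pin pout hs hi ho; split => //.
- by move=> a b; rewrite -hs.
- by move=> i; rewrite pin hi.
- by move=> i; rewrite pout ho.
Qed.

End Zip.

Lemma find_edge (T : finType) (e : rel T) x y :
  connect e x y -> x != y -> exists u w, e u w /\ u != w.
Proof.
move=> /connectP[p ep ->]; elim: p x ep => [|z p IH] x /=; first by rewrite eqxx.
case/andP=> exz pz nx; case: (eqVneq x z) => [exz'|nxz]; last by exists x, z.
by move: pz nx; rewrite -exz'; apply: IH.
Qed.

Section Minor.
Variable k : nat.

Definition edgeless (V : finType) : graph :=
  @Graph V (fun _ _ => false) (fun _ _ => erefl).

Section Contract.
Variables (F : bgraph k) (a b : gV (bG F)) (hab : a != b).

Definition V1 := {x : gV (bG F) | x != b}.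
Definition cf (x : gV (bG F)) : V1 := insubd (exist (fun x => x != b) a hab) x.

Lemma val_cf x : val (cf x) = if x == b then a else x.
Proof. by rewrite /cf val_insubd; case: eqP. Qed.

Definition E1 (x1 y1 : V1) : bool :=
  [exists u, exists w, [&& cf u == x1, cf w == y1, gE u w &
     ~~ (((u == a) && (w == b)) || ((u == b) && (w == a)))]].

Lemma E1_sym : symmetric E1.
Proof.
have h : forall x1 y1, E1 x1 y1 -> E1 y1 x1.
  move=> x1 y1 /existsP[u /existsP[w /and4P[h1 h2 h3 h4]]].
  apply/existsP; exists w; apply/existsP; exists u.
  apply/and4P; split=> //; first by rewrite gsym.
  by move: h4; apply: contra => /orP[] /andP[-> ->]; rewrite ?orbT.
by move=> x1 y1; apply/idP/idP; apply: h.
Qed.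

Definition Fc : bgraph k :=
  @BGraph k (@Graph V1 E1 E1_sym) (fun i => cf (bin F i)) (fun i => cf (bout F i)).

Lemma contr_Fc : gE a b -> contr_step F Fc.
Proof.
move=> eab; exists a, b, cf; split; [split|split] => //.
- by move=> b1; exists (val b1); rewrite /cf valKd.
- move=> p q; split.
    move/(congr1 val); rewrite !val_cf.
    case: (eqVneq p b) => [->|pb]; case: (eqVneq q b) => [->|qb] h.
    + by constructor 1.
    + by constructor 3.
    + by constructor 2.
    + by constructor 1.
  case=> [->|[-> ->]|[-> ->]] //; apply: val_inj; rewrite !val_cf eqxx;
    by rewrite (negbTE hab).
- move=> x1 y1; split.
    case/existsP=> u /existsP[w /and4P[/eqP h1 /eqP h2 h3 h4]].
    exists u, w; split=> //; case=> [[eu ew]|[eu ew]]; move: h4; subst u w;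
      by rewrite !eqxx ?orbT.
  case=> u [w [h1 h2 h3 h4]]; apply/existsP; exists u; apply/existsP; exists w.
  rewrite h1 h2 !eqxx h3 /=; apply/negP => /orP[] /andP[/eqP eu /eqP ew]; apply: h4.
    by left.
  by right.
Qed.

Lemma wlab_Fc al : wlab Fc al = cf (wlab F al).
Proof. by case: (split_ordP al) => i ->; rewrite ?wlab_l ?wlab_r. Qed.

Lemma card_Fc : #|gV (bG Fc)| = #|gV (bG F)|.-1.
Proof. by rewrite /= card_sig -(cardC1 b); apply: eq_card => x; rewrite !inE. Qed.

End Contract.

Lemma LGspec_ext (T : eqType) (Q : bgraph k) (c c' : 'I_(k + k) -> T) :
  (forall al, c al = c' al) -> LGspec Q c -> LGspec Q c'.
Proof.
move=> e [h1 h2 h3]; split=> // al be; rewrite -!e; exact: h3.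
Qed.

Lemma minor_inj (T : eqType) (F : bgraph k) (c : gV (bG F) -> T) :
  (forall x, exists al, wlab F al = x) -> (forall x y, c x = c y -> x = y) ->
  exists Q, bminor F Q /\ LGspec Q (fun al => c (wlab F al)).
Proof.
move=> hs hi.
exists (@BGraph k (edgeless (gV (bG F))) (bin F) (bout F)); split.
  apply: bminor_step (bminor_refl _) _; left; exists id; split => //.
split=> //.
by move=> al be; split=> [e|/hi //]; exact: (congr1 c e).
Qed.

Lemma minor_LG (T : eqType) : forall n (F : bgraph k) (c : gV (bG F) -> T),
  #|gV (bG F)| <= n ->
  (forall x, exists al, wlab F al = x) ->
  (forall x y, c x = c y -> connect (fun u w => gE u w && (c u == c w)) x y) ->
  exists Q, bminor F Q /\ LGspec Q (fun al => c (wlab F al)).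
Proof.
elim=> [|n IH] F c hn hs hc;
  (case: (boolP [forall x, forall y, (c x == c y) ==> (x == y)]) => hinj;
  [apply: minor_inj => // x y e; move/forallP: hinj => /(_ x) /forallP /(_ y);
   by rewrite e eqxx => /eqP|]);
  move/forallPn: hinj => [x /forallPn [y]]; rewrite negb_imply => /andP[/eqP cxy nxy].
  by move: hn; rewrite leqn0 => /eqP/card0_eq/(_ x).
have [u [w [/andP[euw /eqP cuw] nuw]]] := find_edge (hc _ _ cxy) nxy.
pose F1 := Fc nuw.
pose c1 (x1 : gV (bG F1)) := c (val x1).
have c1f : forall x, c1 (cf nuw x) = c x.
  by move=> z; rewrite /c1 val_cf; case: eqP => [->|].
have [Q [hQ hL]] : exists Q, bminor F1 Q /\ LGspec Q (fun al => c1 (wlab F1 al)).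
  apply: IH.
  - rewrite card_Fc; move: hn; case: #|_| => //.
  - move=> x1; have [al e] := hs (val x1); exists al.
    by rewrite /F1 wlab_Fc e /cf valKd.
  - move=> x1 y1 e.
    suff: connect (fun u0 w0 => gE u0 w0 && (c1 u0 == c1 w0))
        (cf nuw (val x1)) (cf nuw (val y1)) by rewrite /cf !valKd.
    move: (hc _ _ e); apply: (connect_map (f := cf nuw)) => p q /andP[epq /eqP cpq].
    case: (boolP (((p == u) && (q == w)) || ((p == w) && (q == u)))) => hp.
      apply: eq_connect0; apply: val_inj; rewrite !val_cf.
      by case/orP: hp => /andP[/eqP -> /eqP ->]; rewrite eqxx (negbTE nuw).
    apply: connect1; apply/andP; split; last by rewrite !c1f cpq.
    apply/existsP; exists p; apply/existsP; exists q; by rewrite !eqxx epq hp.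
exists Q; split.
  apply: bminor_trans hQ; apply: bminor_step (bminor_refl _) _; right.
  exact: contr_Fc.
by apply: LGspec_ext hL => al; rewrite /F1 wlab_Fc c1f.
Qed.

End Minor.

Section Gadgets.
Variable k : nat.

Lemma chain (N : nat) (e : rel 'I_N) (lo hi : nat) :
  (forall z z' : 'I_N, lo <= z -> nat_of_ord z' = (nat_of_ord z).+1 -> z' <= hi -> e z z') ->
  forall z z' : 'I_N, lo <= z -> z <= z' -> z' <= hi -> connect e z z'.
Proof.
move=> h z z' h1 h2 h3; move: {2}(nat_of_ord z' - z) (erefl (nat_of_ord z' - z)) => d.
elim: d z' h2 h3 => [|d IH] z' h2 h3 hd.
  by apply: eq_connect0; apply: val_inj => /=; lia.
have lz : (nat_of_ord z').-1 < N by have := ltn_ord z'; lia.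
pose z'' := Ordinal lz.
apply: (@connect_trans _ _ z''); first by apply: IH => /=; lia.
by apply: connect1; apply: h => /=; lia.
Qed.

Definition eC (c : 'I_(k + k) -> nat) : rel 'I_(k + k) :=
  fun u w => (Cedge u w || Cedge w u) && (c u == c w).

Lemma eC_sym c : connect_sym (eC c).
Proof. by apply: sym_connect_sym => u w; rewrite /eC orbC eq_sym. Qed.

Lemma bC_chain (c : 'I_(k + k) -> nat) lo hi : (hi < k) || (k <= lo) ->
  (forall z z' : 'I_(k + k), lo <= z -> nat_of_ord z' = (nat_of_ord z).+1 -> z' <= hi -> c z = c z') ->
  forall z z' : 'I_(k + k), lo <= z -> z <= z' -> z' <= hi -> connect (eC c) z z'.
Proof.
move=> hl hc; apply: chain => z z' h1 h2 h3; apply/andP; split.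
  by rewrite /Cedge /=; lia.
by rewrite (hc z z').
Qed.

Lemma wlab_bC al : wlab (bC k) al = al.
Proof. by case: (split_ordP al) => i ->; rewrite ?wlab_l ?wlab_r. Qed.
Lemma wlab_bM al : wlab (bM k) al = al.
Proof. by case: (split_ordP al) => i ->; rewrite ?wlab_l ?wlab_r. Qed.

Definition cSn (j a : nat) : nat :=
  if a < k then (if a <= j then 0 else a.+1) else (if a - k <= j then 0 else a.+1).
Definition cHn (j a : nat) : nat :=
  if a < k then (if j < a then a else k + a) else (if j < a - k then a - k else k + a).
Definition cQn (j a : nat) : nat :=
  if a < k then (if a <= j then 0 else a + 2) else (if a - k <= j.+1 then 1 else a + 2).
Definition kan (j a : nat) : nat :=
  if a < k then (if a <= j then 0 else a.+1)
  else (if a - k <= j.+1 then j.+2 else (a - k).+1).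
Definition rhon (j a : nat) : nat :=
  if a < k then (if a <= j then 0 else if a == j.+1 then k + j.+1 else a)
  else (if a - k <= j.+1 then k + j.+1 else a - k).

Lemma gadget_S j : j < k -> exists Q, QP Q /\ LGspec Q (fun al : 'I_(k + k) => cSn j al).
Proof.
move=> hj.
have [Q [hQ hL]] : exists Q, bminor (bC k) Q /\
    LGspec Q (fun al => (fun x : 'I_(k + k) => cSn j x) (wlab (bC k) al)).
  apply: (@minor_LG k nat #|gV (bG (bC k))| (bC k) (fun x : 'I_(k + k) => cSn j x) (leqnn _)).
    by move=> x; exists x; rewrite wlab_bC.
  have h0 : 0 < k + k by lia.
  have hk : k < k + k by lia.
  pose z0 := Ordinal h0; pose zk := Ordinal hk.
  have hc0 : forall lo hi, (forall z : 'I_(k + k), lo <= z <= hi -> cSn j z = 0) ->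
      forall z z' : 'I_(k + k), lo <= z -> nat_of_ord z' = (nat_of_ord z).+1 ->
      z' <= hi -> cSn j z = cSn j z'.
    move=> lo hi h z z' h1 h2 h3; rewrite !h //; apply/andP; split; lia.
  have hS : forall x : 'I_(k + k), cSn j x = 0 -> connect (eC (fun x => cSn j x)) z0 x.
    move=> x; have := ltn_ord x; rewrite {1}/cSn; case: ifP => hx1; case: ifP => hx2 // _ _.
      apply: (bC_chain (lo := 0) (hi := j)); rewrite /= ?hj //; try lia.
      by apply: hc0 => z /andP[h1 h2]; rewrite /cSn; ifs; lia.
    apply: (@connect_trans _ _ zk).
      by apply: connect1; rewrite /eC /Cedge /cSn /=; ifs; lia.
    apply: (bC_chain (lo := k) (hi := k + j)); rewrite /= ?leqnn ?orbT //; try lia.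
    by apply: hc0 => z /andP[h1 h2]; rewrite /cSn; ifs; lia.
  move=> x y e; case: (boolP (cSn j x == 0)) => hx.
    have hy : cSn j y = 0 by rewrite -e; apply/eqP.
    apply: (@connect_trans _ _ z0); last exact: hS.
    by rewrite eC_sym; apply: hS; apply/eqP.
  apply: eq_connect0; apply: val_inj => /=; move: e hx; rewrite /cSn; ifs; lia.
exists Q; split => //; apply: LGspec_ext hL => al; by rewrite wlab_bC.
Qed.


Lemma gadget_H j : exists Q, QS Q /\ LGspec Q (fun al : 'I_(k + k) => cHn j al).
Proof.
have [Q [hQ hL]] : exists Q, bminor (bM k) Q /\
    LGspec Q (fun al => (fun x : 'I_(k + k) => cHn j x) (wlab (bM k) al)).
  apply: (@minor_LG k nat #|gV (bG (bM k))| (bM k) (fun x : 'I_(k + k) => cHn j x) (leqnn _)).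
    by move=> x; exists x; rewrite wlab_bM.
  move=> x y e.
  have : [\/ x = y, nat_of_ord y = x + k | nat_of_ord x = y + k].
    case: (boolP (nat_of_ord y == x + k)) => h; first by constructor 2; apply/eqP.
    case: (boolP (nat_of_ord x == y + k)) => h'; first by constructor 3; apply/eqP.
    constructor 1; apply: val_inj => /=; have := ltn_ord x; have := ltn_ord y.
    by move: e h h'; rewrite /cHn; ifs; lia.
  case=> [->|h|h]; first exact: connect0.
    by apply: connect1; rewrite /= /Medge /= e eqxx andbT; lia.
  by apply: connect1; rewrite /= /Medge /= e eqxx andbT; lia.
exists Q; split => //; apply: LGspec_ext hL => al; by rewrite wlab_bM.
Qed.


Lemma gadget_Q2 j : j.+1 < k -> exists Q, QP Q /\ LGspec Q (fun al : 'I_(k + k) => cQn j al).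
Proof.
move=> hj.
have [Q [hQ hL]] : exists Q, bminor (bC k) Q /\
    LGspec Q (fun al => (fun x : 'I_(k + k) => cQn j x) (wlab (bC k) al)).
  apply: (@minor_LG k nat #|gV (bG (bC k))| (bC k) (fun x : 'I_(k + k) => cQn j x) (leqnn _)).
    by move=> x; exists x; rewrite wlab_bC.
  have h0 : 0 < k + k by lia.
  have hk : k < k + k by lia.
  pose z0 := Ordinal h0; pose zk := Ordinal hk.
  have hc0 : forall v lo hi, (forall z : 'I_(k + k), lo <= z <= hi -> cQn j z = v) ->
      forall z z' : 'I_(k + k), lo <= z -> nat_of_ord z' = (nat_of_ord z).+1 ->
      z' <= hi -> cQn j z = cQn j z'.
    move=> v lo hi h z z' h1 h2 h3; rewrite !h //; apply/andP; split; lia.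
  have hA : forall x : 'I_(k + k), cQn j x = 0 -> connect (eC (fun x => cQn j x)) z0 x.
    move=> x hx; have := ltn_ord x => lx.
    apply: (bC_chain (lo := 0) (hi := j)); rewrite /= //; try lia.
    - apply: (hc0 0) => z /andP[h1 h2]; rewrite /cQn; ifs; lia.
    - by move: hx; rewrite /cQn; ifs; lia.
  have hB : forall x : 'I_(k + k), cQn j x = 1 -> connect (eC (fun x => cQn j x)) zk x.
    move=> x hx; have := ltn_ord x => lx.
    apply: (bC_chain (lo := k) (hi := k + j.+1)); rewrite /= ?leqnn ?orbT //; try lia.
    - apply: (hc0 1) => z /andP[h1 h2]; rewrite /cQn; ifs; lia.
    - by move: hx; rewrite /cQn; ifs; lia.
    - by move: hx; rewrite /cQn; ifs; lia.
  move=> x y e; case: (boolP (cQn j x == 0)) => hx.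
    have hy : cQn j y = 0 by rewrite -e; apply/eqP.
    apply: (@connect_trans _ _ z0); last exact: hA.
    by rewrite eC_sym; apply: hA; apply/eqP.
  case: (boolP (cQn j x == 1)) => hx1.
    have hy : cQn j y = 1 by rewrite -e; apply/eqP.
    apply: (@connect_trans _ _ zk); last exact: hB.
    by rewrite eC_sym; apply: hB; apply/eqP.
  apply: eq_connect0; apply: val_inj => /=; move: e hx hx1; rewrite /cQn; ifs; lia.
exists Q; split => //; apply: LGspec_ext hL => al; by rewrite wlab_bC.
Qed.


Lemma LG_par (T1 T2 T : eqType) (H Q : bgraph k) (c1 : 'I_(k + k) -> T1)
  (c2 : 'I_(k + k) -> T2) (ka : 'I_(k + k) -> T) :
  LGspec H c1 -> LGspec Q c2 ->
  (forall al be, c1 al = c1 be -> ka al = ka be) ->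
  (forall al be, c2 al = c2 be -> ka al = ka be) ->
  (forall al be, ka al = ka be ->
     connect (fun x y => (c1 x == c1 y) || (c2 x == c2 y)) al be) ->
  LGspec (bpar H Q) ka.
Proof.
move=> hH hQ k1 k2 k3.
have pK : @presK k (bG H) H id (fun _ _ => false) (bin H) (bout H).
  split => //; first exact: pres_id.
  by move=> a b; split => [->|]; [exact: qrel_refl | exact: (qrel_inv (f := id))].
have := presK_par pK hQ => -[[pss pse] pk pin pout].
case: hH => hHe hHs hHk.
have wB : forall al, wlab (bpar H Q) al = qproj (@par_rel _ H Q) (inl (wlab H al)).
  by move=> al; case: (split_ordP al) => i ->; rewrite ?wlab_l ?wlab_r ?pin ?pout.
have hHs1 : forall h, exists al, wlab H al == h.
  by move=> h; have [al e] := hHs h; exists al; apply/eqP.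
split.
- move=> x y; apply/negP => /(pse x y) [a [b [_ _ h]]].
  by have := hHe a b; rewrite h.
- move=> x; have [a <-] := pss x; have [al <-] := hHs a; exists al; exact: wB.
- move=> al be; rewrite !wB; apply: (iff_trans (pk _ _)); split.
    pose nu h := ka (xchoose (hHs1 h)).
    have nuw : forall al, nu (wlab H al) = ka al.
      move=> al0; apply: k1; apply/hHk; exact: (eqP (xchooseP (hHs1 (wlab H al0)))).
    move/(qrel_inv (f := nu)); rewrite !nuw; apply.
    move=> x y /orP[//|/existsP[a1 /existsP[b1 /and3P[/eqP hc /eqP -> /eqP ->]]]].
    by rewrite -[wl _ _ a1]/(wlab H a1) -[wl _ _ b1]/(wlab H b1) !nuw; apply: k2.
  move/k3; apply: (connect_map (f := wlab H)) => x y /orP[/eqP /hHk ->|/eqP h].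
    exact: connect0.
  apply: connect1; apply/orP; left; apply/orP; right.
  apply/existsP; exists x; apply/existsP; exists y; by rewrite h !eqxx.
Qed.


Lemma gadget_G j : j.+1 < k -> exists G, P G /\ LGspec G (fun al : 'I_(k + k) => kan j al).
Proof.
move=> hj; have [H [hH1 hH2]] := gadget_H j; have [Q [hQ1 hQ2]] := gadget_Q2 hj.
exists (bpar H Q); split; first by apply: P_par => //; apply: P_Q; right.
apply: (LG_par hH2 hQ2).
- move=> al be e; have := ltn_ord al; have := ltn_ord be; move: e.
  by rewrite /cHn /kan; ifs; lia.
- move=> al be e; have := ltn_ord al; have := ltn_ord be; move: e.
  by rewrite /cQn /kan; ifs; lia.
pose e := fun x y : 'I_(k + k) => (cHn j x == cHn j y) || (cQn j x == cQn j y).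
have esym : connect_sym e.
  by apply: sym_connect_sym => x y; rewrite /e eq_sym [cQn j y == _]eq_sym.
have rl : forall al : 'I_(k + k), rhon j al < k + k.
  by move=> al; have := ltn_ord al; rewrite /rhon; ifs; lia.
pose rho (al : 'I_(k + k)) : 'I_(k + k) := Ordinal (rl al).
have hr : forall al, connect e al (rho al).
  move=> al; have := ltn_ord al => lal.
  case: (boolP (nat_of_ord al == rhon j al)) => h.
    by apply: eq_connect0; apply: val_inj => /=; apply/eqP.
  apply: connect1; rewrite /e /=; move: h; rewrite /cHn /cQn /rhon; ifs; lia.
move=> al be hk.
have e1 : rho al = rho be.
  apply: val_inj => /=; have := ltn_ord al; have := ltn_ord be; move: hk.
  by rewrite /kan /rhon; ifs; lia.
apply: (@connect_trans _ _ (rho al)); first exact: hr.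
by rewrite e1 esym; exact: hr.
Qed.

End Gadgets.

Section ZipMain.
Variables (k : nat) (X : bgraph k).

Definition pr (j : nat) : rel (gV (bG X)) :=
  fun a b => [exists i : 'I_k, [&& i < j, a == bin X i & b == bout X i]].

Definition sel (j : nat) (i : 'I_k) : 'I_k := if i < j then insubd i j else i.

Lemma val_sel j i : j < k -> nat_of_ord (sel j i) = if i < j then j else i.
Proof. by move=> hj; rewrite /sel; case: ifP => // _; rewrite val_insubd hj. Qed.

Definition Inv (j : nat) := exists Y, P Y /\ exists p,
  @presK k (bG X) Y p (pr j) (fun i => bin X (sel j i)) (fun i => bout X (sel j i)).

Lemma inv0 : P X -> Inv 0.
Proof.
move=> hX; exists X; split => //; exists id; split.
- exact: pres_id.
- move=> a b; split => [->|]; first exact: qrel_refl.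
  by apply: (qrel_inv (f := id)) => x y /existsP[i /and3P[]].
- by move=> i; rewrite /sel ltn0.
- by move=> i; rewrite /sel ltn0.
Qed.

Lemma step_par j : j < k -> Inv j -> exists W, P W /\ exists p,
  @presK k (bG X) W p (pr j.+1) (fun i => bin X (sel j i)) (fun i => bout X (sel j i)).
Proof.
move=> hj [Y [hY [p hK]]].
have [Q [hQ hL]] := gadget_S hj.
have hK2 := presK_par hK hL.
exists (bpar Y Q); split; first exact: P_par.
eexists; apply: (presK_ext hK2) => // a b.
pose jo : 'I_k := Ordinal hj.
pose lin := fun i => bin X (sel j i); pose lout := fun i => bout X (sel j i).
have hS : forall al : 'I_(k + k), cSn k j al = 0 ->
    qrel (pr j.+1) (wl lin lout al) (bin X jo).
  move=> al; case: (split_ordP al) => i -> /=; rewrite ?wl_l ?wl_r /lin /lout.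
    have := ltn_ord i => li; rewrite /cSn /= li; case: ifP => // hij _.
    have -> : sel j i = jo by apply: val_inj; rewrite /= val_sel //; case: ifP => //; lia.
    exact: qrel_refl.
  have := ltn_ord i => li; rewrite /cSn /= ifF; last by lia.
  case: ifP => hij // _.
  have -> : sel j i = jo by apply: val_inj; rewrite /= val_sel //; case: ifP => //; lia.
  rewrite qrel_sym; apply: qrel1; apply/existsP; exists jo; by rewrite /= ltnSn !eqxx.
split.
  apply: qrel_sub => x y /orP[].
    case/existsP=> i /and3P[hi hx hy]; apply: qrel1; apply/existsP; exists i.
    by rewrite hx hy ltnW.
  case/existsP=> al /existsP[be /and3P[/eqP hc /eqP -> /eqP ->]].
  case: (boolP (cSn k j al == 0)) => h0.
    apply: qrel_trans (hS al (eqP h0)) _; rewrite qrel_sym; apply: hS.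
    by rewrite -hc; apply/eqP.
  have -> : al = be.
    apply: val_inj => /=; move: hc h0; have := ltn_ord al; have := ltn_ord be.
    by rewrite /cSn; ifs; lia.
  exact: qrel_refl.
apply: qrel_sub => x y /existsP[i /and3P[hi /eqP -> /eqP ->]].
case: (boolP (i < j)) => hij.
  apply: qrel1; apply/orP; left; apply/existsP; exists i; by rewrite hij !eqxx.
apply: qrel1; apply/orP; right; apply/existsP; exists (lshift k i).
apply/existsP; exists (rshift k i).
rewrite wl_l wl_r /lin /lout /sel (negbTE hij) !eqxx !andbT.
by apply/eqP; rewrite /cSn /=; have := ltn_ord i; ifs; lia.
Qed.

End ZipMain.

Section ZipMain2.
Variables (k : nat) (X : bgraph k).

Lemma step_rel j : j.+1 < k -> (exists W, P W /\ exists p,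
  @presK k (bG X) W p (@pr k X j.+1) (fun i => bin X (sel j i)) (fun i => bout X (sel j i))) ->
  Inv X j.+1.
Proof.
move=> hj [W [hW [p hK]]].
have hj' : j < k by lia.
have [G [hG [ge gs gk]]] := gadget_G hj.
pose t := fun i : 'I_k => sel j.+1 i.
have kan_l : forall i : 'I_k, kan k j (lshift k i) = if i <= j then 0 else i.+1.
  by move=> i; rewrite /kan /= ltn_ord.
have gt : forall i, bout G i = bin G (t i).
  move=> i; rewrite -wlab_r -wlab_l; apply/gk; rewrite kan_l /kan /= val_sel //.
  by have := ltn_ord i; ifs; lia.
have gs' : forall g, exists i, bin G i = g.
  move=> g; have [al <-] := gs g; case: (split_ordP al) => i ->.
    by exists i; rewrite wlab_l.
  by exists (t i); rewrite wlab_r gt.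
have g3 : forall (V : Type) (f : 'I_k -> V) i i', bin G i = bin G i' ->
    f (sel j i) = f (sel j i').
  move=> V f i i'; rewrite -!wlab_l => /gk; rewrite !kan_l => e.
  congr f; apply: val_inj => /=; rewrite !val_sel //; move: e.
  by have := ltn_ord i; have := ltn_ord i'; ifs; lia.
have hK1 := presK_ser hK ge gs' (fun i i' e => g3 _ (fun x => p (bout X x)) i i' e) gt.
have hK2 := presK_star hK1.
have hK3 := presK_ser hK2 ge gs' (fun i i' e => g3 _ (fun x => _ (bin X x)) i i' e) gt.
have hK4 := presK_star hK3.
exists (bstar (bser (bstar (bser W G)) G)); split.
  by apply: P_star; apply: P_ser => //; apply: P_star; apply: P_ser.
eexists; apply: (presK_ext hK4) => // i.
  have -> : sel j (t i) = sel j.+1 i.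
    by apply: val_inj => /=; rewrite !val_sel //; ifs; lia.
  by [].
have -> : sel j (t i) = sel j.+1 i.
  by apply: val_inj => /=; rewrite !val_sel //; ifs; lia.
by [].
Qed.


Lemma inv_all : P X -> forall j, j < k -> Inv X j.
Proof.
move=> hX; elim=> [_|j IH hj]; first exact: inv0.
apply: (step_rel hj); apply: step_par; first lia.
by apply: IH; lia.
Qed.

Lemma zip : P X -> exists Y : bgraph k, P Y /\ giso (btr X) (bG Y).
Proof.
move=> hX.
have [j [hkj [W [hW [p hK]]]]] : exists j, k <= j /\ exists W, P W /\ exists p lin lout,
    @presK k (bG X) W p (@pr k X j) lin lout.
  case: (posnP k) => [k0|kp].
    have [Y [hY [p hp]]] := inv0 hX.
    exists 0; split; first by rewrite k0.
    by exists Y; split => //; exists p; do 2 eexists; exact: hp.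
  have kp' : k.-1 < k by lia.
  have [W [hW [p hp]]] := step_par kp' (inv_all hX kp').
  exists k.-1.+1; split; first lia.
  by exists W; split => //; exists p; do 2 eexists; exact: hp.
case: hK => lin [lout [ps pk _ _]].
exists W; split => //.
apply: (pres_iso (pres_quot _) ps) => a b; rewrite qprojE pk.
rewrite /qrel; rewrite (eq_connect (e' := fun x y => @pr k X j x y || @pr k X j y x)) //.
have e : forall x y, [exists i, (x == bin X i) && (y == bout X i)] = @pr k X j x y.
  move=> x y; apply/existsP/existsP => -[i hi]; exists i; move: hi.
    by rewrite (leq_trans (ltn_ord i) hkj).
  by case/and3P => _ -> ->.
by move=> x y /=; rewrite !e.
Qed.

End ZipMain2.

Lemma lemma4p2_aux (k : nat) :
  forall R S : bgraph k, P R -> P S ->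
    exists Q' : bgraph k, P Q' /\ giso (btr (bser (bstar R) S)) (bG Q').
Proof.
move=> R S hR hS; apply: zip; apply: P_ser => //; exact: P_star.
Qed.

Unset Implicit Arguments.

Theorem lemma4p2 (k : nat) :
  forall R S : bgraph k, P R -> P S ->
    exists Q' : bgraph k, P Q' /\ giso (btr (bser (bstar R) S)) (bG Q').
Proof. exact: lemma4p2_aux. Qed.
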